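(* Let $B\ge 2$ and $\eta\in\mathbb{N}$. If $\gamma_B(\eta+1)\geq B^2$, then $\gamma_B(\eta+1)>\gamma_B(\eta)$.
   Context: Fix an integer base $B \geq 2$. Every integer $x>0$ is written uniquely as $x=\sum_{i=0}^{L(x)-1} x_i B^i$ with digits $0 \le x_i \le B-1$ and $x_{L(x)-1}\neq 0$. Define $\mathcal{H}_B(x)=\sum_{i=0}^{L(x)-1} x_i^2$, $\mathcal{H}_B(0)=0$, $\mathcal{H}_B^0(x)=x$, $\mathcal{H}_B^{n}=\mathcal{H}_B\circ\mathcal{H}_B^{n-1}$. A positive integer $x$ is happy if $\mathcal{H}_B^n(x)=1$ for some $n\in\mathbb{N}$; its height is $\eta_B(x)=\min\{\alpha\in\mathbb{N}:\mathcal{H}_B^\alpha(x)=1\}$. For $n\in\mathbb{N}$, $\gamma_B(n)$ denotes the smallest happy number $x\ge 1$ with $\eta_B(x)=n$. *)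

(* Defs.v *)
From mathcomp Require Import all_boot.
Set Implicit Arguments. Unset Strict Implicit. Unset Printing Implicit Defensive.

Definition digit (B x i : nat) : nat := (x %/ B ^ i) %% B.

(* L(x): number of base-B digits of x > 0 (trunc_log B x = largest e with B^e <= x) *)
Definition numdigits (B x : nat) : nat := (trunc_log B x).+1.

Definition H (B x : nat) : nat :=
  if x == 0 then 0 else \sum_(i < numdigits B x) (digit B x i) ^ 2.

Definition happy (B x : nat) : Prop := 0 < x /\ exists n, iter n (H B) x = 1.

(* eta_B(x) = n : the least alpha with H_B^alpha(x) = 1 is n *)
Definition height (B x n : nat) : Prop :=
  iter n (H B) x = 1 /\ forall m, m < n -> iter m (H B) x <> 1.

(* gamma_B(n) = x : x is the smallest happy number of height n *)
Definition is_gamma (B n x : nat) : Prop :=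
  [/\ 0 < x, happy B x, height B x n &
      forall y, 0 < y -> happy B y -> height B y n -> x <= y].

(* Main.v *)
Require Import Defs.
From mathcomp Require Import all_boot.
From mathcomp Require Import zify.
From Stdlib Require Classical_Prop.

Section S.
Variable B : nat.
Fixpoint sq (k x : nat) : nat :=
  match k with 0 => 0 | k'.+1 => (x %% B) ^ 2 + sq k' (x %/ B) end.

Lemma sq0 k : sq k 0 = 0.
Proof. by elim: k => //= k IH; rewrite mod0n div0n IH. Qed.

Lemma sum_sq k x : \sum_(i < k) digit B x i ^ 2 = sq k x.
Proof.
elim: k x => [|k IH] x; first by rewrite big_ord0.
rewrite big_ord_recl /= -IH /digit expn0 divn1; congr (_ + _).
apply: eq_bigr => i _; by rewrite /bump add1n -divnMA -expnS.
Qed.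

Hypothesis HB : 2 <= B.

Lemma I1 k q : 1 <= q -> sq k q + B <= q * B + 1.
Proof.
elim: k q => [|k IH] q hq /=; first by nia.
have hd := divn_eq q B; have hm : q %% B < B by rewrite ltn_mod; lia.
move: hd hm; set p := q %/ B; set s := q %% B => hd hm.
case: (posnP p) => hp.
  rewrite hp sq0. rewrite hp in hd. nia.
have := IH p hp. nia.
Qed.

Lemma I2 k q : B <= q -> sq k q + (B - 1) * (B - 2) + 1 <= q * B.
Proof.
case: k => [|k] hq /=; first by nia.
have hd := divn_eq q B; have hm : q %% B < B by rewrite ltn_mod; lia.
move: hd hm; set p := q %/ B; set s := q %% B => hd hm.
have hp : 1 <= p by rewrite /p divn_gt0; lia.
have := @I1 k p hp. nia.
Qed.

Lemma J k x : B ^ 2 <= x -> sq k x < x.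
Proof.
have hB2 : 0 < B ^ 2 by rewrite expn_gt0; lia.
case: k => [|k] hx /=; first lia.
have hd := divn_eq x B; have hm : x %% B < B by rewrite ltn_mod; lia.
move: hd hm; set q := x %/ B; set r := x %% B => hd hm.
have hq : B <= q by rewrite /q leq_divRL; [move: hx; rewrite (expnS B 1) expn1 |lia].
have := @I2 k q hq. nia.
Qed.

Lemma H_lt x : B ^ 2 <= x -> H B x < x.
Proof.
move=> hx; rewrite /H.
have hB2 : 0 < B ^ 2 by rewrite expn_gt0; lia.
have -> : (x == 0) = false by apply/negbTE; lia.
rewrite sum_sq; exact: J.
Qed.
End S.

Lemma min_ex (P : nat -> Prop) n : P n -> exists m, P m /\ forall y, P y -> m <= y.
Proof.
elim: n {-2}n (leqnn n) => [|n IH] k hk Pk.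
  exists k; split=> // y _; by move: hk; rewrite leqn0 => /eqP ->.
case: (Classical_Prop.classic (exists y, y < k /\ P y)) => [[y [hy Py]]|hn].
  apply: (IH y) => //; lia.
exists k; split=> // y Py; case: (leqP k y) => // hy; exfalso; apply: hn; by exists y.
Qed.

Theorem lemma2p2 (B eta x : nat) :
  2 <= B -> is_gamma B eta.+1 x -> B ^ 2 <= x ->
  exists y, is_gamma B eta y /\ y < x.
Proof.
move=> hB [x0 _ [hit hmin] _] hx.
have hlt := @H_lt B hB x hx.
set y0 := H B x in hlt.
have hit' : iter eta (H B) y0 = 1 by rewrite /y0 -iterSr.
have hmin' : forall m, m < eta -> iter m (H B) y0 <> 1.
  by move=> m hm; rewrite /y0 -iterSr; apply: hmin.
have y0pos : 0 < y0.
  case: (posnP y0) => // h0; exfalso.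
  have : forall m, iter m (H B) y0 = 0 by elim=> [|m IHm] /=; [rewrite h0 | rewrite IHm].
  by move=> /(_ eta); rewrite hit'.
have Py0 : (fun y => 0 < y /\ happy B y /\ height B y eta) y0.
  by split=> //; split; [split=> //; exists eta | split].
have [m [[m0 [hm1 hm2]] hmm]] := @min_ex (fun y => 0 < y /\ happy B y /\ height B y eta) _ Py0.
exists m; split; last by have := hmm _ Py0; lia.
by split=> // y y0' hy1 hy2; apply: hmm.
Qed.
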